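(* Let $-1\le t\le s\le n$ and $-1\le k\le n-s-1$ be integers. Let $X$ be an $n$-dimensional projective space over a field and let $K$ be a $k$-dimensional subspace of $X$. For each integer $d$ with $-1\le d\le \min\{k,t\}$, let $\mathcal B_d$ be an $(s-d-1,t-d-1)$-blocking set in the quotient space $X/K$. Then the (disjoint) union $$\mathcal B:=\bigcup_{d=-1}^{\min\{k,t\}}\{T\in \mathrm{Gr}_t(X):\ \dim(K\cap T)=d,\ \langle K,T\rangle\in\mathcal B_d\}$$ is an $(s,t)$-blocking set in $X$.
   Context: Projective dimension is used throughout; the empty subspace has dimension $-1$. For a projective space $Y$ and an integer $d$, $\mathrm{Gr}_d(Y)$ is the set of $d$-dimensional subspaces of $Y$. For $K\in\mathrm{Gr}_k(X)$, the quotient space $X/K$ is the projective space of dimension $\dim X-k-1$ whose $r$-dimensional subspaces ($-1\le r\le \dim X-k-1$) are the $(r+k+1)$-dimensional subspaces of $X$ containing $K$, ordered by inclusion (its unique $(-1)$-dimensional subspace is $K$ itself). $\langle K,T\rangle$ denotes the span of $K$ and $T$, regarded as a subspace of $X/K$. For integers $-1\le t\le s\le \dim Y$, an $(s,t)$-blocking set in a projective space $Y$ is a set $\mathcal B\subseteq\mathrm{Gr}_t(Y)$ such that every $s$-dimensional subspace of $Y$ contains at least one element of $\mathcal B$. *)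

(* Defs.v *)
(* A projective space of dimension n over a field F is modelled
   as the lattice of (detachable) vector subspaces of a finite-dimensional
   F-vector space vT with \dim {:vT} = n+1; projective dimension = vector dim - 1. *)
From HB Require Import structures.
From mathcomp Require Import all_boot all_order all_algebra.
Set Implicit Arguments. Unset Strict Implicit. Unset Printing Implicit Defensive.
Import Order.TTheory GRing.Theory Num.Theory.
Local Open Scope ring_scope.

Section Proj.
Variables (F : fieldType) (vT : vectType F).

Definition pdim (U : {vspace vT}) : int := (\dim U)%:Z - 1.

Definition Gr (Y : {vspace vT}) (d : int) (U : {vspace vT}) : Prop :=
  (U <= Y)%VS /\ pdim U = d.

(* Gr_r(X/K): r-dimensional subspaces of the quotient X/K, i.e. the
   (r + k + 1)-dimensional subspaces of X containing K, where k = pdim K *)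
Definition qGr (K : {vspace vT}) (r : int) (U : {vspace vT}) : Prop :=
  (K <= U)%VS /\ pdim U = r + pdim K + 1.

Definition blocking_set (Y : {vspace vT}) (s t : int)
    (B : {vspace vT} -> Prop) : Prop :=
  (forall T, B T -> Gr Y t T) /\
  (forall S, Gr Y s S -> exists T, B T /\ (T <= S)%VS).

(* (s,t)-blocking set in the quotient space X/K (X = the whole space);
   inclusion in X/K is inclusion in X *)
Definition qblocking_set (K : {vspace vT}) (s t : int)
    (B : {vspace vT} -> Prop) : Prop :=
  (forall T, B T -> qGr K t T) /\
  (forall S, qGr K s S -> exists T, B T /\ (T <= S)%VS).

End Proj.

(* Main.v *)
Require Import Defs.
From HB Require Import structures.
From mathcomp Require Import all_boot all_order all_algebra zify.
Import Order.TTheory GRing.Theory Num.Theory.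
Local Open Scope ring_scope.

Local Open Scope nat_scope.
Lemma ext_sub (F : fieldType) (vT : vectType F) (m : nat) : forall j (U V : {vspace vT}),
  j = (m - \dim U)%N -> (U <= V)%VS -> (\dim U <= m <= \dim V)%N ->
  exists W : {vspace vT}, [/\ (U <= W)%VS, (W <= V)%VS & \dim W = m].
Proof.
elim=> [|j IH] U V hj hUV /andP[h1 h2].
  by exists U; split => //; lia.
have hlt : (\dim U < \dim V)%N by lia.
have : ~~ (V <= U)%VS.
  apply/negP => hVU; have := dimvS hVU; lia.
case/subvPn => v vV vU.
have hd : \dim (U + <[v]>) = (\dim U).+1.
  have := dimv_sum_cap U <[v]>; rewrite dim_vline.
  have : (\dim (U + <[v]>) <= \dim U)%N = false.
    apply/negbTE/negP => hle.
    have : (U == U + <[v]>)%VS by rewrite eqEdim addvSl hle.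
    move/eqP => e; move: vU; rewrite e memvE addvSr //.
  have := dimvS (addvSl U <[v]>).
  case: (v != 0%R); simpl; lia.
have h' : (U + <[v]> <= V)%VS by rewrite subv_add hUV -memvE.
have [W [h3 h4 h5]] := IH (U + <[v]>)%VS V ltac:(lia) h' ltac:(lia).
exists W; split => //; apply: subv_trans h3; exact: addvSl.
Qed.
Local Close Scope nat_scope.

Theorem theorem3p8 (F : fieldType) (vT : vectType F) (n t s k : int)
    (hn : pdim (fullv : {vspace vT}) = n)
    (ht1 : -1 <= t) (hts : t <= s) (hsn : s <= n)
    (hk1 : -1 <= k) (hkn : k <= n - s - 1)
    (K : {vspace vT}) (hK : pdim K = k)
    (B : int -> {vspace vT} -> Prop)
    (hB : forall d : int, -1 <= d -> d <= k -> d <= t ->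
          qblocking_set K (s - d - 1) (t - d - 1) (B d)) :
  blocking_set fullv s t
    (fun T : {vspace vT} => exists d : int,
       [/\ -1 <= d, d <= k, d <= t,
           Gr fullv t T /\ pdim (K :&: T)%VS = d & B d (K + T)%VS]).
Proof.
split.
  by move=> T [d [_ _ _ [hT _] _]].
move=> S [_ hS].
rewrite /pdim in hK hS hn.
have hKS := dimvS (capvSl K S).
have hKS2 := dimvS (capvSr K S).
pose e := pdim (K :&: S).
have he : e = (\dim (K :&: S))%:Z - 1 by [].
case: (lerP e t) => het.
- have he1 : -1 <= e by lia.
  have hek : e <= k by lia.
  have [hq1 hq2] := hB e he1 hek het.
  have dKS := dimv_sum_cap K S.
  have hKS' : qGr K (s - e - 1) (K + S)%VS.
    split; first exact: addvSl.
    rewrite /pdim; lia.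
  have [U [BU hU]] := hq2 _ hKS'.
  have [KU dU] := hq1 _ BU. rewrite /pdim in dU.
  have eUS : (U + S)%VS = (K + S)%VS.
    apply/eqP; rewrite eqEdim subv_add hU addvSr /=; apply: dimvS.
    by rewrite subv_add (subv_trans KU (addvSl U S)) addvSr.
  have cap : (K :&: (U :&: S))%VS = (K :&: S)%VS by rewrite capvA (capv_idPl KU).
  have dUS := dimv_sum_cap U S. rewrite eUS in dUS.
  have eKU : (K + U :&: S)%VS = U.
    apply/eqP; rewrite eqEdim subv_add KU capvSl /=.
    have := dimv_sum_cap K (U :&: S); rewrite cap; lia.
  exists (U :&: S)%VS; split; last exact: capvSr.
  exists e; split => //.
    split; [split; [exact: subvf | rewrite /pdim; lia] | by rewrite cap].
  by rewrite eKU.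
- have [m hm] : exists m : nat, m%:Z = t + 1 by exists (absz (t+1)); lia.
  have [T [_ TKS dT]] := @ext_sub F vT m _ 0%VS (K :&: S)%VS erefl (sub0v _)
     ltac:(rewrite dimv0; lia).
  have htk : t <= k by lia.
  have [hq1 hq2] := hB t ht1 htk (lexx t).
  have [m2 hm2] : exists m2 : nat, m2%:Z = s - t + k + 1 by exists (absz (s - t + k + 1)); lia.
  have [W [KW _ dW]] := @ext_sub F vT m2 _ K fullv erefl (subvf _)
     ltac:(lia).
  have qW : qGr K (s - t - 1) W by split => //; rewrite /pdim; lia.
  have [U [BU _]] := hq2 W qW.
  have [KU dU] := hq1 U BU.
  have eU : U = K.
    apply/eqP; rewrite eq_sym eqEdim KU /=; rewrite /pdim in dU; lia.
  have TK : (T <= K)%VS := subv_trans TKS (capvSl K S).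
  exists T; split; last exact: subv_trans TKS (capvSr K S).
  exists t; split => //.
    split; [split; [exact: subvf| rewrite /pdim; lia] | rewrite (capv_idPr TK) /pdim; lia].
  by rewrite (addv_idPl TK) -eU.
Qed.
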